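(* Let $K\ge2$, $p\in(0,1)$. Then $$J_*^{\mathrm{OA}}:=\sup_{\lambda\in\mathcal P(\mathcal S)}\ \inf_{\sigma\neq\mathrm{id}}\ D_\lambda\big(f^{\mathrm{OA}}_{\mathrm{id}}\,\|\,f^{\mathrm{OA}}_\sigma\big)=\log\!\Big(\frac1p\Big)\cdot\frac{1-p}{K-1+p},$$ where the infimum is over all bijections $\sigma:[K]\to[K]$ other than the identity. Moreover, the supremum is attained at $$\lambda^*(S)=\begin{cases}\dfrac{1-p^{K-n+1}}{K-1+p}&\text{if }S=\{n,n+1,\dots,K\}\text{ for some }n\in\{2,\dots,K-1\},\\[2mm]\dfrac{1-p^K}{(1-p)(K-1+p)}&\text{if }S=[K],\\[2mm] 0&\text{otherwise.}\end{cases}$$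
   Context: Items are $[K]=\{1,\dots,K\}$, $\mathcal S=\{S\subseteq[K]:|S|\ge2\}$, and $\mathcal P(\mathcal S)$ is the set of probability distributions on $\mathcal S$. For a bijection $\sigma:[K]\to[K]$, $S\in\mathcal S$, $i\in S$, let $\sigma(i\mid S)=1+|\{j\in S:\sigma(j)<\sigma(i)\}|$ (local rank) and define the Ordinal Attraction preference $f^{\mathrm{OA}}_\sigma(i\mid S)=\frac{1-p}{1-p^{|S|}}p^{\sigma(i\mid S)-1}$ for $i\in S$. For preferences $f,f'$ (families of positive probability vectors $f(\cdot\mid S)$ on each $S$), $D_S(f\|f')=\sum_{i\in S}f(i\mid S)\log\frac{f(i\mid S)}{f'(i\mid S)}$ and $D_\lambda(f\|f')=\sum_{S\in\mathcal S}\lambda(S)D_S(f\|f')$. *)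

(* Defs.v *)
From HB Require Import structures.
From mathcomp Require Import all_boot all_order all_algebra all_fingroup.
From mathcomp Require Import all_classical all_reals exp.
Set Implicit Arguments. Unset Strict Implicit. Unset Printing Implicit Defensive.
Import Order.TTheory GRing.Theory Num.Theory.
Local Open Scope ring_scope.

(* Items [K] = {1,...,K} are represented by 'I_K (item i+1 <-> ordinal i).
   A bijection sigma : [K] -> [K] is a permutation {perm 'I_K}; only the
   relative order of values matters for local ranks. *)

Section OA.
Variables (R : realType) (K : nat).

Definition local_rank (s : {perm 'I_K}) (S : {set 'I_K}) (i : 'I_K) : nat :=
  (1 + #|[set j in S | (s j < s i)%N]|)%N.

Definition fOA (p : R) (s : {perm 'I_K}) (S : {set 'I_K}) (i : 'I_K) : R :=
  (1 - p) / (1 - p ^+ #|S|) * p ^+ (local_rank s S i).-1.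

Definition DS (f f' : {set 'I_K} -> 'I_K -> R) (S : {set 'I_K}) : R :=
  \sum_(i in S) f S i * ln (f S i / f' S i).

Definition Dlam (lam : {set 'I_K} -> R) (f f' : {set 'I_K} -> 'I_K -> R) : R :=
  \sum_(S : {set 'I_K} | (2 <= #|S|)%N) lam S * DS f f' S.

Definition is_distr (lam : {set 'I_K} -> R) : Prop :=
  (forall S : {set 'I_K}, 0 <= lam S) /\ (forall S : {set 'I_K}, (#|S| < 2)%N -> lam S = 0) /\
  \sum_(S : {set 'I_K} | (2 <= #|S|)%N) lam S = 1.

Definition Jinf (p : R) (lam : {set 'I_K} -> R) : R :=
  inf ((fun s : {perm 'I_K} => Dlam lam (fOA p 1%g) (fOA p s))
         @` [set s | s != 1%g])%classic.

Definition Jstar (p : R) : R :=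
  sup [set J | exists lam, is_distr lam /\ J = Jinf p lam]%classic.

(* lambda^*: S = {n,...,K} with n in {2,...,K-1}: in ordinals, S = {i | n-1 <= i};
   writing m = n-1 (an ordinal), the condition is 2 <= m+1 <= K-1 and the
   exponent K-n+1 = K - m. *)
Definition lamstar (p : R) (S : {set 'I_K}) : R :=
  if S == [set: 'I_K] then (1 - p ^+ K) / ((1 - p) * (K%:R - 1 + p))
  else match [pick m : 'I_K | (2 <= m.+1 <= K - 1)%N && (S == [set i : 'I_K | (m <= i)%N])] with
       | Some m => (1 - p ^+ (K - m)) / (K%:R - 1 + p)
       | None => 0
       end.

End OA.

(* Main.v *)
Require Import Defs.
From HB Require Import structures.
From mathcomp Require Import all_boot all_order all_algebra all_fingroup.
From mathcomp Require Import all_classical all_reals exp.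
From mathcomp Require Import ring lra zify.
Import Order.TTheory GRing.Theory Num.Theory.
Local Open Scope ring_scope.

Section Work.
Variables (R : realType) (n : nat) (p : R).
Hypotheses (p0 : 0 < p) (p1 : p < 1).
Local Notation K := n.+1.

Definition cnt (s : {perm 'I_K}) (S : {set 'I_K}) (i : 'I_K) : nat :=
  #|[set j in S | (s j < s i)%N]|.

Lemma cntE s (S : {set 'I_K}) i : cnt s S i = (\sum_(j < K) ((j \in S) && (s j < s i)%N))%N.
Proof.
rewrite /cnt -sum1_card big_mkcond /=; apply: eq_bigr => j _; rewrite !inE.
by case: (_ && _).
Qed.

Lemma fOAE s (S : {set 'I_K}) i : fOA p s S i = (1 - p) / (1 - p ^+ #|S|) * p ^+ (cnt s S i).
Proof. by rewrite /fOA /local_rank add1n. Qed.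

Lemma sum_cnt (s : {perm 'I_K}) (S : {set 'I_K}) (g : nat -> R) :
  \sum_(i in S) g (cnt s S i) = \sum_(j < #|S|) g j.
Proof.
have inj : {in S &, injective (cnt s S)}.
  suff H : forall i j, i \in S -> j \in S -> (s i < s j)%N -> (cnt s S i < cnt s S j)%N.
    move=> i j iS jS e; apply/eqP; apply: contraT => ne.
    have : s i != s j by rewrite (inj_eq perm_inj).
    rewrite neq_ltn => /orP[h|h].
      by have := H _ _ iS jS h; rewrite e ltnn.
    by have := H _ _ jS iS h; rewrite e ltnn.
  move=> i j iS jS h; apply: proper_card; apply/properP; split.
    apply/fintype.subsetP => k; rewrite !inE => /andP[-> /= h2]; exact: ltn_trans h2 h.
  by exists i; rewrite !inE ?iS ?h // ltnn andbF.
have lt : forall i, i \in S -> (cnt s S i < #|S|)%N.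
  move=> i iS; apply: proper_card; apply/properP; split.
    by apply/fintype.subsetP => k; rewrite !inE => /andP[].
  by exists i; rewrite // !inE ltnn andbF.
rewrite -big_enum -(big_map (cnt s S) xpredT g).
rewrite -(big_mkord xpredT g) /index_iota subn0.
apply: perm_big; apply: uniq_perm.
- by rewrite map_inj_in_uniq ?enum_uniq // => x y; rewrite !mem_enum; exact: inj.
- exact: iota_uniq.
- have U : uniq (map (cnt s S) (enum S)).
    by rewrite map_inj_in_uniq ?enum_uniq // => x y; rewrite !mem_enum; exact: inj.
  have Sub : {subset map (cnt s S) (enum S) <= iota 0 #|S|}.
    by move=> x /mapP[i]; rewrite mem_enum => iS ->; rewrite mem_iota add0n lt.
  have Sz : (size (iota 0 #|S|) <= size (map (cnt s S) (enum S)))%N.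
    by rewrite size_map size_iota cardE.
  by have [_ H] := uniq_min_size U Sub Sz.
Qed.

Lemma geom_sum (N : nat) : (1 - p) * \sum_(j < N) p ^+ j = 1 - p ^+ N.
Proof.
have := subrXX 1 p N; rewrite expr1n => ->; congr (_ * _).
by apply: eq_bigr => i _; rewrite expr1n mul1r.
Qed.

Lemma fOA_norm s (S : {set 'I_K}) : (0 < #|S|)%N -> \sum_(i in S) fOA p s S i = 1.
Proof.
move=> S0; under eq_bigr do rewrite fOAE.
rewrite -mulr_sumr (sum_cnt s S (fun j => p ^+ j)).
have h : 1 - p ^+ #|S| != 0.
  by rewrite subr_eq0 eq_sym lt_eqF //; rewrite exprn_ilt1 ?ltW // -lt0n.
by rewrite mulrAC geom_sum mulfV.
Qed.


Lemma c_gt0 (S : {set 'I_K}) : (0 < #|S|)%N -> 0 < (1 - p) / (1 - p ^+ #|S|).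
Proof.
move=> S0; apply: divr_gt0; first by rewrite subr_gt0.
by rewrite subr_gt0 exprn_ilt1 ?ltW // -lt0n.
Qed.

Lemma DSE s (S : {set 'I_K}) :
  DS (fOA p 1%g) (fOA p s) S =
  ln (p^-1) * \sum_(i in S) fOA p 1%g S i * ((cnt s S i)%:R - (cnt 1%g S i)%:R).
Proof.
rewrite /DS mulr_sumr; apply: eq_bigr => i iS; rewrite !fOAE.
have S0 : (0 < #|S|)%N by apply/card_gt0P; exists i.
have c0 := c_gt0 S S0.
set c := (1 - p) / _ in c0 *.
have pa : forall k, 0 < p ^+ k by move=> k; exact: exprn_gt0.
have -> : c * p ^+ cnt 1%g S i / (c * p ^+ cnt s S i) = p ^+ cnt 1%g S i / p ^+ cnt s S i.
  by rewrite invfM mulrACA mulfV ?gt_eqF // mul1r.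
rewrite ln_div; last 2 first.
- rewrite posrE; exact: pa.
- rewrite posrE; exact: pa.
rewrite !(lnXn _ p0).
have pp : p \in Num.pos.
  rewrite posrE; exact: p0.
rewrite (lnV pp) -!(mulr_natr (ln p)).
ring.
Qed.


Lemma sum_diff1 (f g : 'I_K -> nat) b :
  (forall j, j != b -> f j = g j) -> (\sum_j f j + g b = \sum_j g j + f b)%N.
Proof.
move=> h; rewrite (bigD1 b) //= [in RHS](bigD1 b) //=.
rewrite (eq_bigr (fun j => g j)); last by move=> j hj; apply: h; move: hj; rewrite ?andTb.
lia.
Qed.

Definition ia (k : nat) : 'I_K := inord k.
Definition ib (k : nat) : 'I_K := inord k.+1.
Definition tau (k : nat) : {perm 'I_K} := tperm (ia k) (ib k).

Lemma val_ia k : (k < n)%N -> (ia k : nat) = k.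
Proof. by move=> hk; rewrite /ia /= inordK //; lia. Qed.
Lemma val_ib k : (k < n)%N -> (ib k : nat) = k.+1.
Proof. by move=> hk; rewrite /ib /= inordK. Qed.

Lemma eq_ia k j : (k < n)%N -> (j == ia k) = ((j : nat) == k).
Proof. by move=> hk; rewrite -val_eqE /= (val_ia _ hk). Qed.
Lemma eq_ib k j : (k < n)%N -> (j == ib k) = ((j : nat) == k.+1).
Proof. by move=> hk; rewrite -val_eqE /= (val_ib _ hk). Qed.

Lemma val_tau k j : (k < n)%N ->
  (tau k j : nat) = if (j : nat) == k then k.+1 else if (j : nat) == k.+1 then k else (j : nat).
Proof.
move=> hk; rewrite /tau; case: tpermP => [->|->|ha hb].
- by rewrite (val_ia _ hk) eqxx (val_ib _ hk).
- by rewrite (val_ib _ hk) (val_ia _ hk) eqxx; case: eqP => //; lia.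
- have /negbTE -> : (j : nat) != k by rewrite -(eq_ia _ _ hk); apply/eqP.
  by have /negbTE -> : (j : nat) != k.+1 by rewrite -(eq_ib _ _ hk); apply/eqP.
Qed.

Lemma cnt_tau_other k (S : {set 'I_K}) (i : 'I_K) : (k < n)%N -> (i : nat) != k -> (i : nat) != k.+1 ->
  cnt (tau k) S i = cnt 1%g S i.
Proof.
move=> hk h1 h2; rewrite !cntE; apply: eq_bigr => j _; rewrite !perm1.
congr (nat_of_bool (_ && _)); rewrite !(val_tau _ _ hk) (negbTE h1) (negbTE h2).
by case: ((j : nat) =P k) => e1; case: ((j : nat) =P k.+1) => e2; apply/idP/idP; lia.
Qed.

Lemma cnt1E (S : {set 'I_K}) i : cnt 1%g S i = (\sum_(j < K) ((j \in S) && (j < i)%N))%N.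
Proof. by rewrite cntE; apply: eq_bigr => j _; rewrite !perm1. Qed.

Lemma ia_lt_ib k : (k < n)%N -> (ia k < ib k)%N.
Proof. by move=> hk; rewrite (val_ia _ hk) (val_ib _ hk). Qed.

Lemma cnt_tau_a k (S : {set 'I_K}) : (k < n)%N ->
  cnt (tau k) S (ia k) = (cnt 1%g S (ia k) + (ib k \in S))%N.
Proof.
move=> hk; rewrite cntE cnt1E.
set F := fun j => (j \in S) && (tau k j < tau k (ia k))%N.
set G := fun j => (j \in S) && (j < ia k)%N.
have H := @sum_diff1 F G (ib k).
have Gb : G (ib k) = false by rewrite /G ltnNge ltnW ?andbF // ia_lt_ib.
have Fb : F (ib k) = (ib k \in S) by rewrite /F /tau tpermR tpermL ia_lt_ib // andbT.
rewrite Gb Fb in H; suff : (\sum_j F j + 0 = \sum_j G j + (ib k \in S))%N.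
  by rewrite /F /G addn0.
apply: H => j; rewrite (eq_ib _ _ hk) => hj; rewrite /F /G (val_tau _ _ hk) (val_tau _ _ hk) (val_ia _ hk) eqxx.
rewrite (negbTE hj); by congr (nat_of_bool (_ && _)); case: ((j : nat) =P k) => e1; apply/idP/idP; lia.
Qed.

Lemma cnt_tau_b k (S : {set 'I_K}) : (k < n)%N ->
  (cnt (tau k) S (ib k) + (ia k \in S))%N = cnt 1%g S (ib k).
Proof.
move=> hk; rewrite cntE cnt1E.
set F := fun j => (j \in S) && (tau k j < tau k (ib k))%N.
set G := fun j => (j \in S) && (j < ib k)%N.
have H := @sum_diff1 F G (ia k).
have Ga : G (ia k) = (ia k \in S) by rewrite /G ia_lt_ib // andbT.
have Fa : F (ia k) = false by rewrite /F /tau tpermR tpermL ltnNge ltnW ?andbF // ia_lt_ib.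
rewrite Ga Fa addn0 in H; rewrite H //.
move=> j; rewrite (eq_ia _ _ hk) => hj; rewrite /F /G (val_tau _ _ hk) (val_tau _ _ hk) (val_ib _ hk).
have -> : (k.+1 == k) = false by lia.
rewrite eqxx (negbTE hj).
by congr (nat_of_bool (_ && _)); case: ((j : nat) =P k.+1) => e1; apply/idP/idP; lia.
Qed.

Lemma cnt1_b k (S : {set 'I_K}) : (k < n)%N ->
  cnt 1%g S (ib k) = (cnt 1%g S (ia k) + (ia k \in S))%N.
Proof.
move=> hk; rewrite !cnt1E.
set F := fun j => (j \in S) && (j < ib k)%N.
set G := fun j => (j \in S) && (j < ia k)%N.
have H := @sum_diff1 F G (ia k).
have Ga : G (ia k) = false by rewrite /G ltnn andbF.
have Fa : F (ia k) = (ia k \in S) by rewrite /F ia_lt_ib // andbT.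
rewrite Ga Fa addn0 in H; rewrite -H //.
move=> j; rewrite (eq_ia _ _ hk) => hj; rewrite /F /G (val_ia _ hk) (val_ib _ hk).
by congr (nat_of_bool (_ && _)); apply/idP/idP; lia.
Qed.


Lemma ia_neq_ib k : (k < n)%N -> ib k != ia k.
Proof. by move=> hk; rewrite (eq_ia _ _ hk) (val_ib _ hk); lia. Qed.

Lemma DS_tau k (S : {set 'I_K}) : (k < n)%N ->
  DS (fOA p 1%g) (fOA p (tau k)) S =
  ln (p^-1) * (1 - p) * (((ia k \in S) && (ib k \in S))%:R * fOA p 1%g S (ia k)).
Proof.
move=> hk; rewrite DSE big_mkcond (bigD1 (ia k)) //= (bigD1 (ib k)) /=; last first.
  exact: ia_neq_ib.
rewrite big1 ?addr0; last first.
  move=> i /andP[h1 h2]; case: ifP => // _.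
  rewrite cnt_tau_other //; first by rewrite subrr mulr0.
    by rewrite -(eq_ia _ _ hk).
  by rewrite -(eq_ib _ _ hk).
have ea := cnt_tau_a k S hk.
have eb := cnt_tau_b k S hk.
have e1 := cnt1_b k S hk.
have et : cnt (tau k) S (ib k) = cnt 1%g S (ia k).
  by apply/eqP; rewrite -(eqn_add2r (ia k \in S)) eb e1.
rewrite ea et !fOAE e1.
case: (boolP (ia k \in S)) => ha; case: (boolP (ib k \in S)) => hb /=.
- rewrite !natrD exprD expr1; ring.
- rewrite !addn0; ring.
- rewrite !addn0; ring.
- ring.
Qed.


Lemma f1_ge0 (S : {set 'I_K}) i : (0 < #|S|)%N -> 0 <= fOA p 1%g S i.
Proof.
move=> S0; rewrite fOAE; apply: mulr_ge0; first exact: ltW (c_gt0 S S0).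
exact: exprn_ge0 (ltW p0).
Qed.

Lemma L_gt0 : 0 < ln (p^-1).
Proof. by apply: ln_gt0; rewrite invf_gt1. Qed.

Lemma perS (S : {set 'I_K}) : (0 < #|S|)%N -> (0 < n)%N ->
  \sum_(k < n) DS (fOA p 1%g) (fOA p (tau k)) S
  + p * DS (fOA p 1%g) (fOA p (tau n.-1)) S <= ln (p^-1) * (1 - p).
Proof.
move=> S0 n0.
have hn1 : (n.-1 < n)%N by rewrite prednK.
under eq_bigr => k _ do rewrite (DS_tau _ S (ltn_ord k)).
rewrite (DS_tau _ S hn1).
set L' := ln (p^-1) * (1 - p).
rewrite -mulr_sumr (mulrCA p L') -mulrDr.
have L0 : 0 <= L' by apply: mulr_ge0; [exact: ltW L_gt0 | rewrite subr_ge0; exact: ltW p1].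
rewrite -[X in _ <= X]mulr1; apply: ler_wpM2l; first exact: L0.
rewrite -[X in _ <= X](fOA_norm 1%g S S0) [X in _ <= X]big_mkcond [X in _ <= X]big_ord_recr /=.
apply: lerD.
- apply: ler_sum => k _.
  have ek : widen_ord (leqnSn n) k = ia k by apply: val_inj; rewrite /= (val_ia _ (ltn_ord k)).
  rewrite ek; case: (ia k \in S) => /=; last by rewrite mul0r.
  case: (ib k \in S) => /=; first by rewrite mul1r; exact: lexx.
  by rewrite mul0r; exact: f1_ge0 _ _ S0.
- have eb : ib n.-1 = ord_max by apply: val_inj; rewrite /= (val_ib _ hn1) prednK.
  have e1 := cnt1_b _ S hn1.
  case: (boolP (ia n.-1 \in S)) => ha /=; last first.
    rewrite mul0r mulr0; case: ifP => _; [exact: f1_ge0 _ _ S0 | exact: lexx].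
  case: (boolP (ib n.-1 \in S)) => hb /=; last first.
    rewrite mul0r mulr0; case: ifP => _; [exact: f1_ge0 _ _ S0 | exact: lexx].
  rewrite -eb hb mul1r !fOAE e1 ha addn1 exprS.
  by rewrite mulrCA mulrC; exact: lexx.
Qed.


Lemma Jinf_le (lam : {set 'I_K} -> R) s : s != 1%g ->
  Jinf p lam <= Dlam lam (fOA p 1%g) (fOA p s).
Proof.
move=> hs; rewrite /Jinf.
set F := fun s : {perm 'I_K} => Dlam lam (fOA p 1%g) (fOA p s).
have hlb : has_lbound (F @` [set s | s != 1%g])%classic.
  exists (- \sum_(t : {perm 'I_K}) `|F t|) => y [t _ <-].
  have h1 : `|F t| <= \sum_(t0 : {perm 'I_K}) `|F t0|.
    rewrite (bigD1 t) //= lerDl; apply: sumr_ge0 => u _; exact: normr_ge0.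
  apply: le_trans (_ : - `|F t| <= F t); first by rewrite lerN2.
  by rewrite lerNl -normrN; exact: ler_norm.
by apply: (ge_inf hlb); exists s.
Qed.

Lemma Jinf_ge (lam : {set 'I_K} -> R) v :
  (exists s : {perm 'I_K}, s != 1%g) ->
  (forall s, s != 1%g -> v <= Dlam lam (fOA p 1%g) (fOA p s)) ->
  v <= Jinf p lam.
Proof.
move=> [s0 hs0] h; rewrite /Jinf; apply: lb_le_inf.
  by exists (Dlam lam (fOA p 1%g) (fOA p s0)); exists s0.
by move=> y [t ht <-]; exact: h.
Qed.

Lemma tau_neq1 k : (k < n)%N -> tau k != 1%g.
Proof.
move=> hk; apply/eqP => e.
by have := ia_neq_ib _ hk; rewrite -{1}(perm1 (ia k)) -e /tau tpermL eqxx.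
Qed.


Lemma Kden : n.+1%:R - 1 + p = n%:R + p.
Proof. by rewrite -natr1 addrK. Qed.

Lemma den_gt0 : 0 < n%:R + p.
Proof. by apply: ltr_wpDl => //; exact: ler0n. Qed.

Lemma upper (lam : {set 'I_K} -> R) : is_distr lam -> (0 < n)%N ->
  Jinf p lam <= ln (p^-1) * ((1 - p) / (n.+1%:R - 1 + p)).
Proof.
move=> [l0 [_ l1]] n0; rewrite Kden.
set V := ln (p^-1) * ((1 - p) / (n%:R + p)).
set D := fun k : nat => Dlam lam (fOA p 1%g) (fOA p (tau k)).
have hn1 : (n.-1 < n)%N by rewrite prednK.
have hsum : \sum_(k < n) D k + p * D n.-1 <= ln (p^-1) * (1 - p).
  rewrite /D /Dlam exchange_big /= mulr_sumr -big_split /=.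
  set L' := ln (p^-1) * (1 - p).
  rewrite -[X in _ <= X]mulr1 -l1 mulr_sumr; apply: ler_sum => S hS.
  rewrite -mulr_sumr mulrCA -mulrDr [X in _ <= X]mulrC; apply: ler_wpM2l; first exact: l0.
  by apply: perS => //; apply: leq_trans hS.
case: (pselect (exists k : 'I_n, D k <= V)) => [[k hk]|nk].
  by apply: le_trans hk; exact: (Jinf_le lam (tau k) (tau_neq1 _ (ltn_ord k))).
have lt : forall k : 'I_n, V < D k.
  by move=> k; rewrite ltNge; apply/negP => h; apply: nk; exists k.
have h1 : \sum_(k < n) V < \sum_(k < n) D k.
  apply: ltr_sum; last by move=> k _; exact: lt.
  by apply/hasP; exists (Ordinal n0); [rewrite mem_index_enum | by []].
have h2 : p * V < p * D n.-1 by rewrite ltr_pM2l //; exact: (lt (Ordinal hn1)).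
have := lt_le_trans (ltrD h1 h2) hsum.
rewrite sumr_const card_ord -mulr_natl -mulrDl.
have -> : (n%:R + p) * V = ln (p^-1) * (1 - p).
  have hd : n%:R + p != 0 by exact: lt0r_neq0 den_gt0.
  by rewrite /V; field.
by rewrite ltxx.
Qed.


Definition tail (m : nat) : {set 'I_K} := [set i : 'I_K | (m <= i)%N].

Lemma val_inord m : (m < K)%N -> ((inord m : 'I_K) : nat) = m.
Proof. by move=> hm; rewrite inordK. Qed.

Lemma tail_notin m : (m < K)%N -> (inord m : 'I_K) \notin tail m.+1.
Proof. by move=> hm; rewrite inE val_inord // ltnn. Qed.

Lemma tail_in m : (m < K)%N -> (inord m : 'I_K) \in tail m.
Proof. by move=> hm; rewrite inE val_inord. Qed.

Lemma tail_split m : (m < K)%N -> tail m = (inord m : 'I_K) |: tail m.+1.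
Proof.
move=> hm; apply/setP => i; rewrite !inE -val_eqE /= val_inord //.
by apply/idP/idP; [move=> h; apply/orP; case: (ltngtP m i) h => //; lia
                  | case/orP => [/eqP -> //|]; lia].
Qed.

Lemma tail_K : tail K = finset.set0.
Proof. by apply/setP => i; rewrite !inE leqNgt ltn_ord. Qed.

Lemma tail0 : tail 0 = [set: 'I_K].
Proof. by apply/setP => i; rewrite !inE. Qed.

Lemma card_tail m : (m <= K)%N -> #|tail m| = (K - m)%N.
Proof.
suff H : forall d, (d <= K)%N -> #|tail (K - d)| = d.
  by move=> hm; rewrite -{1}(subKn hm) H // leq_subr.
elim=> [|d IH] hd; first by rewrite subn0 tail_K cards0.
have hm : (K - d.+1 < K)%N by lia.
rewrite tail_split // cardsU1 tail_notin //.
have -> : (K - d.+1).+1 = (K - d)%N by lia.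
rewrite IH //; lia.
Qed.

Lemma tail_inj m m' : (m < K)%N -> (m' < K)%N -> tail m = tail m' -> m = m'.
Proof.
move=> h h' e; have a := tail_in _ h; have b := tail_in _ h'.
rewrite e inE val_inord // in a; rewrite -e inE val_inord // in b; lia.
Qed.


Lemma tail_neqT m : (0 < m)%N -> (m < K)%N -> tail m != [set: 'I_K].
Proof.
move=> m0 hm; apply/negP => /eqP e.
have := finset.in_setT (inord 0 : 'I_K); rewrite -e inE val_inord //; lia.
Qed.

Lemma lam_tail0 : lamstar p (tail 0) = (1 - p ^+ K) / ((1 - p) * (K%:R - 1 + p)).
Proof. by rewrite /lamstar tail0 eqxx. Qed.

Lemma lam_tailm m : (0 < m)%N -> (m < n)%N ->
  lamstar p (tail m) = (1 - p ^+ (K - m)) / (K%:R - 1 + p).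
Proof.
move=> m0 hm; rewrite /lamstar (negbTE (tail_neqT _ m0 _)); last by lia.
case: pickP => [m' /andP[hm' /eqP e] | none].
  have := @tail_inj m m' (ltn_trans hm (ltnSn n)) (ltn_ord m') e.
  by move=> ->.
have := none (inord m); rewrite val_inord; last by lia.
have -> : (2 <= m.+1 <= K - 1)%N by lia.
by rewrite /tail eqxx.
Qed.

Lemma lam_other (S : {set 'I_K}) : (0 < n)%N ->
  (forall m, (m < n)%N -> S != tail m) -> lamstar p S = 0.
Proof.
move=> n0 h; rewrite /lamstar.
have -> : (S == [set: 'I_K]) = false by apply/negbTE; rewrite -tail0; exact: h.
case: pickP => [m' /andP[hm' /eqP e] | //].
have : (m' < n)%N by lia.
by move/h; rewrite e /tail eqxx.
Qed.

Lemma sum_lam (F : {set 'I_K} -> R) : (0 < n)%N ->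
  \sum_(S : {set 'I_K} | (2 <= #|S|)%N) lamstar p S * F S =
  \sum_(m < n) lamstar p (tail m) * F (tail m).
Proof.
move=> n0.
set T := (fun m : 'I_n => tail m) @: [set: 'I_n].
rewrite (bigID (fun S => S \in T)) /= [X in _ + X]big1 ?addr0; last first.
  move=> S /andP[_ hS]; rewrite lam_other ?mul0r // => m hm.
  apply: contra hS => /eqP ->; apply/imsetP; exists (Ordinal hm) => //.
rewrite (eq_bigl (fun S => S \in T)); last first.
  move=> S; case: (boolP (S \in T)) => h; rewrite ?andbF ?andbT //.
  case/imsetP: h => m _ ->; rewrite card_tail; last by apply: ltnW; apply: ltn_trans (ltn_ord m) _.
  have := ltn_ord m; lia.
rewrite big_imset /=; last first.
  move=> x y _ _ e; apply: val_inj; apply: tail_inj e.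
    exact: ltn_trans (ltn_ord x) (ltnSn n).
  exact: ltn_trans (ltn_ord y) (ltnSn n).
by apply: eq_bigl => i; rewrite finset.in_setT.
Qed.


Lemma one_sub_exp_ge0 k : 0 <= 1 - p ^+ k.
Proof. by rewrite subr_ge0; apply: exprn_ile1; [exact: ltW p0 | exact: ltW p1]. Qed.

Lemma lam_ge0 (S : {set 'I_K}) : 0 <= lamstar p S.
Proof.
have d0 : 0 <= K%:R - 1 + p by rewrite Kden; exact: ltW den_gt0.
rewrite /lamstar; case: ifP => _.
  apply: divr_ge0; first exact: one_sub_exp_ge0.
  by apply: mulr_ge0 => //; rewrite subr_ge0; exact: ltW p1.
case: pickP => [m _|_]; last exact: lexx.
by apply: divr_ge0 => //; exact: one_sub_exp_ge0.
Qed.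

Lemma lam_small (S : {set 'I_K}) : (0 < n)%N -> (#|S| < 2)%N -> lamstar p S = 0.
Proof.
move=> n0 hS; apply: lam_other => // m hm; apply/eqP => e.
by move: hS; rewrite e card_tail; lia.
Qed.

Lemma geo2 N : \sum_(j < N.+2) p ^+ j = 1 + p + \sum_(1 <= m < N.+1) p ^+ (N.+2 - m).
Proof.
elim: N => [|N IH].
  by rewrite big_ord_recr big_ord_recr big_ord0 /= add0r expr0 expr1 big_geq // addr0.
rewrite big_ord_recr /= IH (big_ltn (m := 1)) //.
rewrite -[in X in _ = _ + _ + (_ + X)](add1n 1) big_addn.
have -> : (N.+2 - 1 = N.+1)%N by [].
rewrite (eq_big_nat _ _ (F2 := fun m => p ^+ (N.+2 - m))); last first.
  by move=> i hi; congr (p ^+ _); lia.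
have -> : (N.+3 - 1 = N.+2)%N by [].
rewrite -!addrA; congr (_ + (_ + _)); rewrite addrC; congr (_ + _); apply: eq_big_nat => i hi; congr (p ^+ _); lia.
Qed.

Lemma lam_sum1 : (0 < n)%N -> \sum_(S : {set 'I_K} | (2 <= #|S|)%N) lamstar p S = 1.
Proof.
move=> n0; have := sum_lam (fun _ => 1) n0.
under eq_bigr do rewrite mulr1.
move=> ->; under eq_bigr do rewrite mulr1.
rewrite -(big_mkord xpredT (fun m => lamstar p (tail m))) (big_ltn n0) lam_tail0.
rewrite (eq_big_nat _ _ (F2 := fun m => (1 - p ^+ (K - m)) / (K%:R - 1 + p))); last first.
  by move=> i /andP[h1 h2]; rewrite lam_tailm.
rewrite -mulr_suml sumrB sumr_const_nat Kden.
have g := geo2 n.-1; rewrite (prednK n0) in g.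
have e : 1 - p ^+ K = (1 - p) * (1 + p + \sum_(1 <= m < n) p ^+ (K - m)).
  by rewrite -g geom_sum.
rewrite e.
set G := \sum_(1 <= m < n) p ^+ (K - m).
rewrite -[(1 *+ (n - 1))]mulr_natr mul1r natrB //.
have hd : n%:R + p != 0 by exact: lt0r_neq0 den_gt0.
have hp : 1 - p != 0 by apply: lt0r_neq0; rewrite subr_gt0; exact: p1.
by field; rewrite hd hp.
Qed.


Definition A (s : {perm 'I_K}) m : R :=
  \sum_(i in tail m) p ^+ (cnt 1%g (tail m) i) *
     ((cnt s (tail m) i)%:R - (cnt 1%g (tail m) i)%:R).
Definition tm (s : {perm 'I_K}) m : nat := cnt s (tail m) (inord m).
Definition E (s : {perm 'I_K}) m : R :=
  (tm s m)%:R - \sum_(i in tail m.+1)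
     (if (s i < s (inord m))%N then p ^+ (cnt 1%g (tail m) i) else 0).

Lemma cnt_tail_step (s : {perm 'I_K}) m i : (m < K)%N -> i \in tail m.+1 ->
  cnt s (tail m) i = (cnt s (tail m.+1) i + (s (inord m) < s i))%N.
Proof.
move=> hm hi; rewrite !cntE.
set f := fun j => (j \in tail m) && (s j < s i)%N.
set g := fun j => (j \in tail m.+1) && (s j < s i)%N.
have H := @sum_diff1 f g (inord m).
have gb : g (inord m) = false by rewrite /g (negbTE (tail_notin _ hm)).
have fb : f (inord m) = (s (inord m) < s i)%N by rewrite /f tail_in.
rewrite gb fb addn0 in H; rewrite H //.
move=> j hj; rewrite /f /g !inE; congr (nat_of_bool (_ && _)).
have : (j : nat) != m by move: hj; apply: contra => /eqP e; apply/eqP; apply: val_inj; rewrite /= val_inord.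
by move=> h; apply/idP/idP; lia.
Qed.

Lemma cnt1_tail_m m : (m < K)%N -> cnt 1%g (tail m) (inord m) = 0%N.
Proof.
move=> hm; rewrite cnt1E; apply: big1 => j _; rewrite inE val_inord //.
by case: andP => // [[h1 h2]]; lia.
Qed.

Lemma REC (s : {perm 'I_K}) m : (m < K)%N -> A s m = p * A s m.+1 + E s m.
Proof.
move=> hm; rewrite /A /E.
rewrite [X in X = _](_ : _ = \sum_(i in (inord m : 'I_K) |: tail m.+1)
   (p ^+ (cnt 1%g (tail m) i) * ((cnt s (tail m) i)%:R - (cnt 1%g (tail m) i)%:R)));
  last by rewrite -tail_split.
rewrite big_setU1 /=; last exact: tail_notin.
rewrite cnt1_tail_m // expr0 mul1r subr0 mulr_sumr.
set X := \sum_(i in tail m.+1) _.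
set Y := \sum_(i in tail m.+1) _.
set Z := \sum_(i in tail m.+1) _.
have H : X = Y - Z.
  rewrite /X /Y /Z -sumrB; apply: eq_bigr => i hi.
  rewrite (cnt_tail_step s _ _ hm hi) (cnt_tail_step 1%g _ _ hm hi) !perm1 val_inord //.
  have -> : (m < i)%N by move: hi; rewrite inE.
  case: (ltngtP (s i) (s (inord m))) => h.
  - rewrite /= !natrD exprD expr1; ring.
  - rewrite /= !natrD exprD expr1; ring.
  - have e : i = inord m by apply: (@perm_inj _ s); apply: val_inj.
    by move: hi; rewrite e (negbTE (tail_notin _ hm)).
rewrite H; ring.
Qed.


Lemma tm_sum (s : {perm 'I_K}) m : (m < K)%N ->
  (tm s m)%:R = \sum_(i in tail m.+1) (if (s i < s (inord m))%N then 1 else 0 : R).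
Proof.
move=> hm; rewrite /tm cntE natr_sum [RHS]big_mkcond /=; apply: eq_bigr => j _.
case: (eqVneq j (inord m)) => [->|hj].
  by rewrite ltnn andbF (negbTE (tail_notin _ hm)).
have hj' : (j : nat) != m by move: hj; apply: contra => /eqP e; apply/eqP; apply: val_inj; rewrite /= val_inord.
have -> : (j \in tail m) = (j \in tail m.+1) by rewrite !inE; apply/idP/idP; lia.
by case: (j \in tail m.+1); case: (s j < s (inord m))%N.
Qed.

Lemma E_ge (s : {perm 'I_K}) m : (m < K)%N -> (tm s m)%:R * (1 - p) <= E s m.
Proof.
move=> hm; rewrite /E mulrBr mulr1 lerD2l lerN2 (tm_sum s _ hm) mulrC mulr_sumr.
apply: ler_sum => i hi.
case: ifP => _; last by rewrite mulr0; exact: lexx.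
rewrite mulr1 (cnt_tail_step 1%g _ _ hm hi) !perm1 val_inord //.
have -> : (m < i)%N by move: hi; rewrite inE.
rewrite addn1 exprSr -[X in _ <= X]mul1r; apply: ler_wpM2r; first exact: ltW p0.
by apply: exprn_ile1; [exact: ltW p0 | exact: ltW p1].
Qed.

Lemma tm_ge0 (s : {perm 'I_K}) m : (m < K)%N -> 0 <= E s m.
Proof.
move=> hm; apply: le_trans (E_ge s _ hm); apply: mulr_ge0; first exact: ler0n.
by rewrite subr_ge0; exact: ltW p1.
Qed.

Lemma A_last (s : {perm 'I_K}) : 0 <= A s n.
Proof.
rewrite (REC s _ (ltnSn n)).
have -> : A s n.+1 = 0 by rewrite /A tail_K big_set0.
by rewrite mulr0 add0r; exact: tm_ge0.
Qed.

Lemma telescope (s : {perm 'I_K}) k : (k < n)%N ->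
  A s 0 + (1 - p) * \sum_(1 <= m < k.+1) A s m = \sum_(0 <= m < k.+1) E s m + p * A s k.+1.
Proof.
elim: k => [|k IH] hk.
  by rewrite big_geq // mulr0 addr0 big_nat1 (REC s _ (ltn_trans hk (ltnSn n))) addrC.
rewrite (@big_nat_recr _ _ _ k.+1 1) // (@big_nat_recr _ _ _ k.+1 0) //= mulrDr addrA IH; last by lia.
rewrite (REC s _ (_ : k.+1 < K)%N); last by lia.
ring.
Qed.


Lemma incr_ge (f : {perm 'I_K}) : (forall i j : 'I_K, (i < j)%N -> (f i < f j)%N) ->
  forall i : 'I_K, (i <= f i)%N.
Proof.
move=> h.
suff H : forall d (i : 'I_K), (i : nat) = d -> (d <= f i)%N by move=> i; exact: H.
elim=> [//|d IH] i hi.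
have hd : (d < K)%N by have := ltn_ord i; lia.
have h1 := IH (inord d) (val_inord _ hd).
have h2 : (f (inord d) < f i)%N by apply: h; rewrite val_inord // hi.
lia.
Qed.

Lemma incr_id (s : {perm 'I_K}) : (forall i j : 'I_K, (i < j)%N -> (s i < s j)%N) -> s = 1%g.
Proof.
move=> h; have g1 := incr_ge _ h.
have hinv : forall i j : 'I_K, (i < j)%N -> ((s^-1)%g i < (s^-1)%g j)%N.
  move=> i j hij; rewrite ltnNge; apply/negP => hle.
  have hne : (s^-1)%g j != (s^-1)%g i.
    by rewrite (inj_eq perm_inj); apply/eqP => e; move: hij; rewrite e ltnn.
  have hlt : ((s^-1)%g j < (s^-1)%g i)%N.
    by rewrite ltn_neqAle hle andbT; move: hne; apply: contra => /eqP e; apply/eqP; apply: val_inj.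
  have := h _ _ hlt; rewrite !permKV; lia.
have g2 := incr_ge _ hinv.
apply/permP => i; apply: val_inj; rewrite perm1 /=.
have := g1 i; have := g2 (s i); rewrite permK; lia.
Qed.

Lemma inv_exists (s : {perm 'I_K}) : s != 1%g -> exists m, (m < n)%N /\ (0 < tm s m)%N.
Proof.
move=> hs.
case: (pselect (exists i j : 'I_K, (i < j)%N /\ (s j < s i)%N)) => [[i [j [hij hji]]] | nex].
  exists i; split; first by have := ltn_ord j; lia.
  rewrite /tm; apply/card_gt0P; exists j.
  have -> : (inord i : 'I_K) = i by apply: val_inj; rewrite /= val_inord.
  by rewrite !inE (ltnW hij) hji.
exfalso; move/eqP: hs; apply; apply: incr_id => i j hij.
rewrite ltnNge; apply/negP => hle.
have hne : s j != s i by rewrite (inj_eq perm_inj); apply/eqP => e; move: hij; rewrite e ltnn.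
have hlt : (s j < s i)%N.
  by rewrite ltn_neqAle hle andbT; move: hne; apply: contra => /eqP e; apply/eqP; apply: val_inj.
by apply: nex; exists i, j.
Qed.


Lemma DS_tail (s : {perm 'I_K}) m : (m < K)%N ->
  DS (fOA p 1%g) (fOA p s) (tail m) = ln (p^-1) * ((1 - p) / (1 - p ^+ (K - m))) * A s m.
Proof.
move=> hm; rewrite DSE; under eq_bigr do rewrite fOAE.
rewrite card_tail; last exact: ltnW.
rewrite -mulrA; congr (_ * _); rewrite /A mulr_sumr.
by apply: eq_bigr => i _; rewrite mulrA.
Qed.

Lemma exp_neq1 k : (0 < k)%N -> 1 - p ^+ k != 0.
Proof.
move=> k0; apply: lt0r_neq0; rewrite subr_gt0.
have h := exprn_ilt1 k (ltW p0) p1; rewrite h; lia.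
Qed.

Lemma key (s : {perm 'I_K}) : s != 1%g ->
  1 - p <= \sum_(0 <= m < n) E s m + p * A s n.
Proof.
move=> hs; have [m0 [hm0 ht]] := inv_exists _ hs.
have hAn : 0 <= p * A s n by apply: mulr_ge0; [exact: ltW p0 | exact: A_last].
apply: le_trans (_ : \sum_(0 <= m < n) E s m <= _); last by rewrite lerDl; exact: hAn.
rewrite big_mkord (bigD1 (Ordinal hm0)) /=; last done.
apply: le_trans (_ : E s m0 <= _); last first.
  rewrite lerDl; apply: sumr_ge0 => i _; apply: tm_ge0; exact: ltn_trans (ltn_ord i) (ltnSn n).
apply: le_trans (E_ge s _ (ltn_trans hm0 (ltnSn n))).
rewrite -[X in X <= _]mul1r; apply: ler_wpM2r; first by rewrite subr_ge0; exact: ltW p1.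
rewrite ler1n; exact: ht.
Qed.

Lemma lower (s : {perm 'I_K}) : (0 < n)%N -> s != 1%g ->
  ln (p^-1) * ((1 - p) / (K%:R - 1 + p)) <= Dlam (lamstar p) (fOA p 1%g) (fOA p s).
Proof.
move=> n0 hs.
have hd : n%:R + p != 0 by exact: lt0r_neq0 den_gt0.
have hp : 1 - p != 0 by apply: lt0r_neq0; rewrite subr_gt0; exact: p1.
rewrite /Dlam (sum_lam _ n0).
rewrite -(big_mkord xpredT (fun m => lamstar p (tail m) * DS (fOA p 1%g) (fOA p s) (tail m))).
rewrite (big_ltn n0) lam_tail0 DS_tail // subn0.
rewrite (eq_big_nat _ _ (F2 := fun m => ln (p^-1) * (1 - p) / (n%:R + p) * A s m)); last first.
  move=> m /andP[h1 h2]; rewrite lam_tailm // DS_tail; last by lia.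
  have hm : 1 - p ^+ (K - m) != 0 by apply: exp_neq1; lia.
  by rewrite Kden; field; rewrite hd hm.
have hK : 1 - p ^+ K != 0 by exact: exp_neq1.
rewrite -mulr_sumr Kden.
have hn1 : (n.-1 < n)%N by rewrite prednK.
have tel := telescope s _ hn1; rewrite (prednK n0) in tel.
set Sg := \sum_(1 <= i < n) A s i.
have -> : (1 - p ^+ K) / ((1 - p) * (n%:R + p)) *
  (ln (p^-1) * ((1 - p) / (1 - p ^+ K)) * A s 0) +
  ln (p^-1) * (1 - p) / (n%:R + p) * Sg =
  ln (p^-1) / (n%:R + p) * (A s 0 + (1 - p) * Sg).
  by field; rewrite hd hp hK.
rewrite tel.
have -> : ln (p^-1) * ((1 - p) / (n%:R + p)) = ln (p^-1) / (n%:R + p) * (1 - p).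
  by field.
apply: ler_wpM2l; last exact: key.
apply: divr_ge0; [exact: ltW L_gt0 | exact: ltW den_gt0].
Qed.

End Work.

Theorem mainTheorem8 (R : realType) (K : nat) (p : R) :
  (2 <= K)%N -> 0 < p < 1 ->
  @Jstar R K p = ln (p^-1) * ((1 - p) / (K%:R - 1 + p)) /\
  @is_distr R K (@lamstar R K p) /\
  @Jinf R K p (@lamstar R K p) = ln (p^-1) * ((1 - p) / (K%:R - 1 + p)).
Proof.
case: K => [//|n] hK /andP[p0 p1].
have n0 : (0 < n)%N by [].
have hd : @is_distr R n.+1 (@lamstar R n.+1 p).
  split; first by move=> S; exact: (@lam_ge0 R n p p0 p1 S).
  split; first by move=> S hS; exact: (@lam_small R n p p0 p1 S n0 hS).
  exact: (@lam_sum1 R n p p0 p1 n0).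
have hJ : @Jinf R n.+1 p (@lamstar R n.+1 p) = ln (p^-1) * ((1 - p) / (n.+1%:R - 1 + p)).
  apply/le_anti/andP; split; first exact: (@upper R n p p0 p1 _ hd n0).
  apply: Jinf_ge.
    by exists (tau n 0); exact: (@tau_neq1 R n p p0 p1 0 n0).
  by move=> s hs; exact: (@lower R n p p0 p1 s n0 hs).
split; last by split.
rewrite /Jstar; apply/le_anti/andP; split.
  apply: ge_sup; first by exists (@Jinf R n.+1 p (@lamstar R n.+1 p)), (@lamstar R n.+1 p).
  by move=> y [lam [hl ->]]; exact: (@upper R n p p0 p1 lam hl n0).
have hub : has_ubound [set J | exists lam, @is_distr R n.+1 lam /\ J = @Jinf R n.+1 p lam]%classic.
  exists (ln (p^-1) * ((1 - p) / (n.+1%:R - 1 + p))) => y [lam [hl ->]]; exact: (@upper R n p p0 p1 lam hl n0).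
by apply: (ub_le_sup hub); exists (@lamstar R n.+1 p); rewrite hJ.
Qed.
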